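(* (a) For every $L\in\mathbb{N}$, $\mathcal{C}(L+1)-\mathcal{C}(L)\ge 2$. (b) For every $n\ge 2$ and every $L\in\mathbb{N}$ with $2^n\le L\le 2^n+2^{n-1}-1$, $\mathcal{C}(L+1)-\mathcal{C}(L)\ge 3$.
   Context: Let $\mathcal{A}=\{a,x,y,z\}$ and let $\tau$ be the substitution (monoid morphism on finite words over $\mathcal{A}$) defined by $\tau(a)=axa$, $\tau(x)=y$, $\tau(y)=z$, $\tau(z)=x$. For a finite word $w$, $\mathrm{Sub}(w)$ denotes the set of finite (contiguous) subwords of $w$. Let $\mathrm{Sub}_\tau=\bigcup_{s\in\mathcal{A},\,n\in\mathbb{N}\cup\{0\}}\mathrm{Sub}(\tau^n(s))$. The word complexity is $\mathcal{C}(L)=$ the number of elements of $\mathrm{Sub}_\tau$ of length $L$. *)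

(* Defs.v *)
From HB Require Import structures.
From mathcomp Require Import all_boot.
From Stdlib Require Import ClassicalEpsilon.
Set Implicit Arguments. Unset Strict Implicit. Unset Printing Implicit Defensive.

Inductive letter := La | Lx | Ly | Lz.

Definition letter_to (c : letter) : 'I_4 :=
  match c with La => inord 0 | Lx => inord 1 | Ly => inord 2 | Lz => inord 3 end.
Definition letter_of (i : 'I_4) : letter :=
  match val i with 0 => La | 1 => Lx | 2 => Ly | _ => Lz end.
Lemma letter_toK : cancel letter_to letter_of.
Proof. by case; rewrite /letter_of /= inordK. Qed.

HB.instance Definition _ := Finite.copy letter (can_type letter_toK).

Definition tau_letter (c : letter) : seq letter :=
  match c with
  | La => [:: La; Lx; La]
  | Lx => [:: Ly]
  | Ly => [:: Lz]
  | Lz => [:: Lx]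
  end.
Definition tau (w : seq letter) : seq letter := flatten (map tau_letter w).

Definition in_Sub_tau (w : seq letter) : Prop :=
  exists (s : letter) (n : nat), infix w (iter n tau [:: s]).

Definition in_Sub_tau_b (w : seq letter) : bool :=
  if excluded_middle_informative (in_Sub_tau w) then true else false.

Definition complexity (L : nat) : nat :=
  #|[set t : L.-tuple letter | in_Sub_tau_b t]|.

(* Main.v *)
Require Import Defs.
From mathcomp Require Import all_boot.
From mathcomp Require Import zify.
From Stdlib Require Import ClassicalEpsilon.
Set Implicit Arguments. Unset Strict Implicit. Unset Printing Implicit Defensive.

Lemma tau_cat s t : tau (s ++ t) = tau s ++ tau t.
Proof. by rewrite /tau map_cat flatten_cat. Qed.

Lemma iter_tau_cat n s t : iter n tau (s ++ t) = iter n tau s ++ iter n tau t.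
Proof. elim: n => //= n IH; by rewrite IH tau_cat. Qed.

Definition cyc (c : letter) : letter :=
  match c with La => La | Lx => Ly | Ly => Lz | Lz => Lx end.

Lemma tau_letter1 (s : letter) : s != La -> tau [:: s] = [:: cyc s].
Proof. by destruct s; rewrite ?eqxx. Qed.

Lemma cyc_neq (s : letter) : s != La -> cyc s != La.
Proof. by destruct s; rewrite ?eqxx // => _; apply/eqP. Qed.

Lemma iter_tau_letter n s : s != La -> iter n tau [:: s] = [:: iter n cyc s].
Proof.
elim: n s => [|n IH] s Hs //.
by rewrite iterSr tau_letter1 // IH ?iterSr // cyc_neq.
Qed.

Definition P n := iter n tau [:: La].
Definition c n := iter n cyc Lx.

Lemma PS n : P n.+1 = P n ++ c n :: P n.
Proof.
rewrite /P iterSr /= /tau /=.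
rewrite -[[:: La; Lx; La]]/([:: La] ++ [:: Lx] ++ [:: La]) !iter_tau_cat.
have HX : iter n tau [:: Lx] = [:: c n] by rewrite iter_tau_letter //; apply/eqP.
by rewrite HX.
Qed.

Lemma cS n : c n.+1 = cyc (c n).
Proof. by rewrite /c iterS. Qed.

Lemma c_neq n : c n != La.
Proof. elim: n => [|n IH]; first by apply/eqP. by rewrite cS cyc_neq. Qed.

Lemma c3 n : c (n + 3) = c n.
Proof. by rewrite /c iterD. Qed.

Lemma sizeP n : (size (P n)).+1 = 2 ^ n.+1.
Proof.
elim: n => // n IH; rewrite PS size_cat /= expnS -IH; lia.
Qed.

Lemma P_suffix k j : exists p, P (k + j) = p ++ P k.
Proof.
elim: j => [|j [p Hp]]; first by exists [::]; rewrite addn0.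
rewrite addnS PS Hp; exists (p ++ P k ++ [:: c (k + j)] ++ p).
by rewrite -?catA.
Qed.

Lemma P_prefix k j : exists p, P (k + j) = P k ++ p.
Proof.
elim: j => [|j [p Hp]]; first by exists [::]; rewrite addn0 cats0.
rewrite addnS PS Hp; exists (p ++ c (k + j) :: P k ++ p).
by rewrite -?catA.
Qed.

Lemma iter_cyc_neq n s : s != La -> iter n cyc s != La.
Proof. move=> Hs; elim: n => //= n IH; exact: cyc_neq. Qed.

Definition sub (w : seq letter) := exists k, infix w (P k).

Lemma subE w : in_Sub_tau w <-> sub w.
Proof.
split.
- move=> [s [n H]]; case: (s =P La) => [E|/eqP Hs].
    by subst s; exists n.
  rewrite iter_tau_letter // in H.
  exists 3; apply: infix_trans H _.
  rewrite infix1s /P /=.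
  have : iter n cyc s != La by apply: iter_cyc_neq.
  case: (iter n cyc s); rewrite ?eqxx // => _; by rewrite /tau /= !inE eqxx ?orbT.
- move=> [k H]; by exists La, k.
Qed.

Lemma subbE w : in_Sub_tau_b w = true <-> sub w.
Proof.
rewrite /in_Sub_tau_b; case: excluded_middle_informative => H; split => //.
  by move=> _; apply/subE.
by move=> /subE.
Qed.

Lemma sub_ext w : sub w -> exists d, sub (rcons w d).
Proof.
move=> [k /infixP [p [q E]]].
case: q E => [|d q] E.
  exists (c k), k.+1; apply/infixP; exists p, (P k).
  by rewrite PS E cats0 -cats1 -!catA.
exists d, k; apply/infixP; exists p, q; by rewrite E -cats1 -!catA.
Qed.

Lemma sub_suffix k i j : sub (rcons (drop i (P k)) (c (k + j))).
Proof.
have [p Hp] := P_suffix k j.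
exists (k + j).+1; apply/infixP; exists (p ++ take i (P k)), (P (k + j)).
by rewrite PS {1}Hp -cats1 -{1}(cat_take_drop i (P k)) -!catA.
Qed.

Lemma tk L (e : (L.+1).-tuple letter) : size (take L e) == L.
Proof. by rewrite size_take size_tuple ltnSn. Qed.

Lemma tr_size L (b : L.-tuple letter) d : size (rcons b d) == L.+1.
Proof. by rewrite size_rcons size_tuple. Qed.

Lemma take_rcons_t L (b : L.-tuple letter) d : take L (rcons b d) = b.
Proof. by rewrite -cats1 take_size_cat // size_tuple. Qed.

Lemma count L (D : {set (L.+1).-tuple letter}) (W : seq (seq letter)) :
  (forall e : (L.+1).-tuple letter, e \in D -> sub e) ->
  (forall e : (L.+1).-tuple letter, e \in D -> take L e \in W) ->
  (forall b, b \in W -> size b = L -> sub b ->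
     exists e : (L.+1).-tuple letter, [/\ sub e, e \notin D & take L e = b]) ->
  complexity L + #|D| <= complexity L.+1.
Proof.
move=> HD HW Hb.
rewrite /complexity.
set A := [set t : (L.+1).-tuple letter | in_Sub_tau_b t].
set B := [set t : L.-tuple letter | in_Sub_tau_b t].
pose g (e : (L.+1).-tuple letter) : L.-tuple letter := Tuple (tk e).
have HBs : B \subset g @: (A :\: D).
  apply/subsetP => b; rewrite inE => /subbE Sb.
  have [e [Se nD Te]] : exists e : (L.+1).-tuple letter,
      [/\ sub e, e \notin D & take L e = b].
    case Hw: (val b \in W).
      by apply: Hb => //; rewrite size_tuple.
    have [d Sd] := sub_ext Sb.
    exists (Tuple (tr_size b d)); split => //=; last by rewrite take_rcons_t.
    apply/negP => /HW; by rewrite take_rcons_t Hw.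
  apply/imsetP; exists e.
    by rewrite !inE nD /=; apply/subbE.
  by apply: val_inj; rewrite /= Te.
have H1 := subset_leq_card HBs.
have H2 := leq_imset_card g (A :\: D).
have HDA : A :&: D = D.
  apply/setIidPr/subsetP => e He; rewrite inE; apply/subbE; exact: HD.
rewrite -(cardsID D A) HDA.
by rewrite addnC leq_add2l; apply: leq_trans H1 H2.
Qed.

Lemma c_dist n : [/\ c n != c n.+1, c n != c n.+2 & c n.+1 != c n.+2].
Proof.
rewrite !cS; have := c_neq n; case: (c n); rewrite ?eqxx // => _;
by split; apply/negP => /eqP.
Qed.

Lemma rcons_eq_last (s s' : seq letter) d1 d2 : rcons s d1 = rcons s' d2 -> d1 = d2.
Proof. by move=> /(congr1 (last La)); rewrite !last_rcons. Qed.

Lemma size_P_ge k : k <= size (P k).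
Proof. elim: k => // k IH; rewrite PS size_cat /=; lia. Qed.

Lemma partA L : 0 < L -> complexity L + 2 <= complexity L.+1.
Proof.
move=> _.
set i := size (P L) - L.
have Hsz : size (drop i (P L)) == L.
  by apply/eqP; rewrite size_drop /i; have := size_P_ge L; lia.
pose wt : L.-tuple letter := Tuple Hsz.
pose e0 := Tuple (tr_size wt (c L)).
pose e1 := Tuple (tr_size wt (c L.+1)).
pose e2 := Tuple (tr_size wt (c L.+2)).
have [d01 d02 d12] := c_dist L.
have Hne : e1 != e2.
  apply/negP => /eqP /(congr1 val) /= /rcons_eq_last /eqP; by rewrite (negbTE d12).
have <- : #|[set e1; e2]| = 2 by rewrite cards2 Hne.
apply: (count (W := [:: val wt])).
- move=> e; rewrite in_set2 => /orP [] /eqP -> /=.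
    by have := sub_suffix L i 1; rewrite addn1.
  by have := sub_suffix L i 2; rewrite addn2.
- move=> e; rewrite in_set2 => /orP [] /eqP ->; by rewrite (@take_rcons_t L wt) inE.
- move=> b; rewrite inE => /eqP -> _ _; exists e0; split.
  + by have := sub_suffix L i 0; rewrite addn0.
  + rewrite in_set2; apply/negP => /orP [] /eqP /(congr1 val) /= /rcons_eq_last /eqP.
      by rewrite (negbTE d01).
    by rewrite (negbTE d02).
  + by rewrite take_rcons_t.
Qed.

Lemma tne_last L (w w' : L.-tuple letter) d d' : d != d' ->
  Tuple (tr_size w d) != Tuple (tr_size w' d').
Proof.
move=> H; apply/negP => /eqP /(congr1 val) /= /rcons_eq_last /eqP.
by rewrite (negbTE H).
Qed.

Lemma tne_take L (w w' : L.-tuple letter) d d' : val w != val w' ->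
  Tuple (tr_size w d) != Tuple (tr_size w' d').
Proof.
move=> H; apply/negP => /eqP /(congr1 (fun e : (L.+1).-tuple letter => take L e)) /=.
rewrite !take_rcons_t => E; apply: (negP H); apply/eqP; exact: E.
Qed.

Lemma sub_w2a m i : sub (rcons (drop i (P m) ++ c m :: P m.+1) (c m.+1)).
Proof.
have [p Hp] := P_suffix m 3.
have [q Hq] := P_prefix m.+2 1.
have Hq' : P (m + 3) = P m.+2 ++ q by rewrite -Hq; congr P; lia.
have Hc : c (m + 3) = c m by rewrite c3.
exists (m + 3).+1; apply/infixP; exists (p ++ take i (P m)), (P m.+1 ++ q).
rewrite PS {1}Hp Hq' Hc PS.
rewrite -{1}(cat_take_drop i (P m)) -cats1 -!catA /=.
done.
Qed.

Lemma sub_w2b m i : sub (rcons (drop i (P m) ++ c m :: P m.+1) (c m)).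
Proof.
have [p Hp] := P_suffix m.+1 2.
have [q Hq] := P_prefix m.+1 2.
have Hp' : P (m + 3) = p ++ P m.+1 by rewrite -Hp; congr P; lia.
have Hq' : P (m + 3) = P m.+1 ++ q by rewrite -Hq; congr P; lia.
have Hc : c (m + 3) = c m by rewrite c3.
exists (m + 3).+1; apply/infixP.
exists (p ++ take i (P m)), (P m ++ q).
rewrite PS {1}Hp' Hq' Hc !PS.
rewrite -{1}(cat_take_drop i (P m)) -cats1 -!catA /=.
by rewrite -?catA.
Qed.

Lemma partB n L : 2 <= n -> 2 ^ n <= L -> L <= 2 ^ n + 2 ^ n.-1 - 1 ->
  complexity L + 3 <= complexity L.+1.
Proof.
case: n => [|[|m]] //= _ H1 H2.
have S0 := sizeP m. have S1 := sizeP m.+1. have S2 := sizeP m.+2.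
have E1 : size (P m.+1) = (size (P m)).*2.+1 by rewrite PS size_cat /=; lia.
have E2 : size (P m.+2) = (size (P m.+1)).*2.+1 by rewrite PS size_cat /=; lia.
set s0 := size (P m) in S0 E1 *.
set s1 := size (P m.+1) in S1 E1 E2 *.
set s2 := size (P m.+2) in S2 E2 *.
set r := L - s1.+1.
set i := s2 - L.
set i2 := s0 - r.
have Hsz : size (drop i (P m.+2)) == L.
  by apply/eqP; rewrite size_drop -/s2 /i; lia.
have Hsz2 : size (drop i2 (P m) ++ c m :: P m.+1) == L.
  by apply/eqP; rewrite size_cat size_drop /= -/s0 -/s1 /i2 /r; lia.
pose wt : L.-tuple letter := Tuple Hsz.
pose wt2 : L.-tuple letter := Tuple Hsz2.
have Hdr1 : drop r (val wt) = c m.+1 :: P m.+1.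
  change (drop r (drop i (P m.+2)) = c m.+1 :: P m.+1).
  rewrite drop_drop (_ : r + i = s1); last by rewrite /r /i; lia.
  by rewrite PS drop_size_cat.
have Hdr2 : drop r (val wt2) = c m :: P m.+1.
  change (drop r (drop i2 (P m) ++ c m :: P m.+1) = c m :: P m.+1).
  by rewrite drop_size_cat // size_drop -/s0 /i2 /r; lia.
have [d01 d02 d12] := c_dist m.
have Hw : val wt != val wt2.
  apply/negP => /eqP E; move: Hdr1; rewrite E Hdr2 => [[]] /eqP.
  by rewrite -cS (negbTE d01).
have [e01 e02 e12] := c_dist m.+2.
pose e0 := Tuple (tr_size wt (c m.+2)).
pose e1 := Tuple (tr_size wt (c m.+3)).
pose e2 := Tuple (tr_size wt (c m.+4)).
pose f0 := Tuple (tr_size wt2 (c m)).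
pose f1 := Tuple (tr_size wt2 (c m.+1)).
have <- : #|e1 |: [set e2; f1]| = 3.
  rewrite cardsU1 cards2 tne_take // in_set2 (negbTE (tne_last _ _ e12)).
  by rewrite (negbTE (tne_take _ _ Hw)).
apply: (count (W := [:: val wt; val wt2])).
- move=> e; rewrite !inE => /orP [/eqP ->|/orP [] /eqP ->].
  + by have := sub_suffix m.+2 i 1; rewrite addn1.
  + by have := sub_suffix m.+2 i 2; rewrite addn2.
  + exact: sub_w2a.
- move=> e; rewrite !inE => /orP [/eqP ->|/orP [] /eqP ->];
    by rewrite ?(@take_rcons_t L wt) ?(@take_rcons_t L wt2) eqxx ?orbT.
- move=> b; rewrite !inE => /orP [] /eqP -> _ _.
  + exists e0; split.
    * by have := sub_suffix m.+2 i 0; rewrite addn0.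
    * rewrite !inE negb_or (tne_last _ _ e01) negb_or (tne_last _ _ e02) /=.
      exact: tne_take.
    * by rewrite take_rcons_t.
  + exists f0; split.
    * exact: sub_w2b.
    * rewrite !inE negb_or eq_sym (tne_take _ _ Hw) negb_or eq_sym (tne_take _ _ Hw) /=.
      exact: tne_last.
    * by rewrite take_rcons_t.
Qed.

Theorem mainTheorem5 :
  (forall L : nat, 0 < L -> complexity L + 2 <= complexity L.+1) /\
  (forall n L : nat, 2 <= n -> 2 ^ n <= L -> L <= 2 ^ n + 2 ^ n.-1 - 1 ->
     complexity L + 3 <= complexity L.+1).
Proof. split; [exact: partA | exact: partB]. Qed.
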